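(* Let $E \to M$ be a smooth vector bundle over a smooth manifold $M$, and let $[\,\cdot,\cdot\,]:\Gamma(E)\times\Gamma(E)\to\Gamma(E)$ be an $\mathbb{R}$-bilinear bracket on the space $\Gamma(E)$ of smooth sections satisfying $$[X,[Y,Z]] = [[X,Y],Z] + [Y,[X,Z]] \quad \text{for all } X,Y,Z\in\Gamma(E).$$ Let $\mathcal{T}$ denote the set of all maps (not necessarily linear) $C^\infty(M)\to C^\infty(M)$, and suppose there is a map $\mathfrak{a}:\Gamma(E)\to\mathcal{T}$ such that $$(\mathfrak{a}(X)f)\,Y = [X,fY] - f[X,Y] \quad\text{for all } f\in C^\infty(M),\ X,Y\in\Gamma(E).$$ Then: (1) $\mathfrak{a}([X,Y]) = [\mathfrak{a}(X),\mathfrak{a}(Y)]_c$ for all $X,Y\in\Gamma(E)$, where for $T,S\in\mathcal{T}$ the commutator is defined by $[T,S]_c\,g = T(Sg) - S(Tg)$ for all $g\in C^\infty(M)$; (2) if $\mathfrak{a}$ is a linear map, then $\mathfrak{a}([X,Y]) = -\mathfrak{a}([Y,X])$ for all $X,Y\in\Gamma(E)$; (3) for each $X\in\Gamma(E)$, $\mathfrak{a}(X)(fg) = f\,(\mathfrak{a}(X)g) + (\mathfrak{a}(X)f)\,g$ for all $f,g\in C^\infty(M)$; consequently, if $\mathfrak{a}(X)$ is linear then it is a derivation of $C^\infty(M)$.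
   Context: $\Gamma(E)$ is regarded as a module over $C^\infty(M)$; it is faithful, i.e. for $h\in C^\infty(M)$, $hY=0$ for all $Y\in\Gamma(E)$ implies $h=0$. A derivation of $C^\infty(M)$ is an $\mathbb{R}$-linear map $D:C^\infty(M)\to C^\infty(M)$ with $D(fg)=fD(g)+D(f)g$. *)

(* Defs.v *)
(* Abstract algebraic model (no smooth-manifold library exists):
   R  : realType           -- the reals
   A  : comAlgType R       -- the commutative R-algebra C^oo(M)
   V  : lmodType A         -- the C^oo(M)-module Gamma(E) (faithful, by hypothesis)
   The real scalar action on V is  c . X := (c%:A) *: X. *)
From HB Require Import structures.
From mathcomp Require Import all_boot all_order all_algebra.
From mathcomp Require Import reals.
Set Implicit Arguments. Unset Strict Implicit. Unset Printing Implicit Defensive.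
Import Order.TTheory GRing.Theory Num.Theory.
Local Open Scope ring_scope.

Definition faithful_module (R : realType) (A : comAlgType R) (V : lmodType A) :=
  forall h : A, (forall Y : V, h *: Y = 0) -> h = 0.

Definition Rbilinear (R : realType) (A : comAlgType R) (V : lmodType A)
  (br : V -> V -> V) :=
  (forall (c : R) (X Y Z : V), br (c%:A *: X + Y) Z = c%:A *: br X Z + br Y Z) /\
  (forall (c : R) (X Y Z : V), br X (c%:A *: Y + Z) = c%:A *: br X Y + br X Z).

Definition leibniz_identity (V : zmodType) (br : V -> V -> V) :=
  forall X Y Z : V, br X (br Y Z) = br (br X Y) Z + br Y (br X Z).

Definition commutator (A : zmodType) (T S : A -> A) : A -> A :=
  fun g => T (S g) - S (T g).

Definition Rlinear_anchor (R : realType) (A : comAlgType R) (V : lmodType A)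
  (a : V -> A -> A) :=
  forall (c : R) (X Y : V), a (c%:A *: X + Y) = (fun f => c *: a X f + a Y f).

Definition Rlinear_map (R : realType) (A : comAlgType R) (T : A -> A) :=
  forall (c : R) (f g : A), T (c *: f + g) = c *: T f + T g.

Definition derivation (R : realType) (A : comAlgType R) (D : A -> A) :=
  Rlinear_map D /\ forall f g : A, D (f * g) = f * D g + D f * g.

(* Main.v *)
Require Import Defs.
From HB Require Import structures.
From mathcomp Require Import all_boot all_order all_algebra.
From mathcomp Require Import reals.
From Stdlib Require Import FunctionalExtensionality.
Import Order.TTheory GRing.Theory Num.Theory.
Local Open Scope ring_scope.

Lemma grp (V : zmodType) (p q r1 r2 t1 t2 : V) :
  (p + r1 + (r2 + t1)) - (q + r2 + (r1 + t2)) - (t1 - t2) = p - q.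
Proof.
rewrite !opprD !opprK !addrA.
rewrite (addrAC _ (- t1) t2) subrK.
rewrite (addrAC _ (- q) (- r2)) (addrAC _ (- q) (- r1)) (addrAC _ (- q) (- t1)).
rewrite (addrAC _ t1 (- r2)) (addrAC _ t1 (- r1)) addrK.
by rewrite !addrK.
Qed.

Theorem proposition1 (R : realType) (A : comAlgType R) (V : lmodType A)
  (Hfaith : faithful_module V)
  (br : V -> V -> V) (Hbil : Rbilinear br) (Hjac : leibniz_identity br)
  (a : V -> A -> A)
  (Ha : forall (f : A) (X Y : V), a X f *: Y = br X (f *: Y) - f *: br X Y) :
  (forall X Y : V, a (br X Y) = commutator (a X) (a Y)) /\
  (Rlinear_anchor a -> forall X Y : V, a (br X Y) = (fun f => - a (br Y X) f)) /\
  (forall X : V,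
     (forall f g : A, a X (f * g) = f * a X g + a X f * g) /\
     (Rlinear_map (a X) -> derivation (a X))).
Proof.
have one : (1 : R)%:A = (1 : A) by rewrite scale1r.
have addr : forall X Y Z, br X (Y + Z) = br X Y + br X Z.
  by move=> X Y Z; have := Hbil.2 1 X Y Z; rewrite one !scale1r.
have addl : forall X Y Z, br (X + Y) Z = br X Z + br Y Z.
  by move=> X Y Z; have := Hbil.1 1 X Y Z; rewrite one !scale1r.
have D : forall f X W, br X (f *: W) = a X f *: W + f *: br X W.
  by move=> f X W; rewrite Ha subrK.
have eqf : forall u v : A, (forall Z : V, u *: Z = v *: Z) -> u = v.
  move=> u v H; apply/eqP; rewrite -subr_eq0; apply/eqP; apply: Hfaith => Z.
  by rewrite scalerBl H subrr.
have P3 : forall X f g, a X (f * g) = f * a X g + a X f * g.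
  move=> X f g; apply: eqf => Z.
  rewrite Ha -!scalerA !D !scalerDr !scalerA scalerDl.
  by rewrite addrA addrK addrC.
split.
  move=> X Y; apply: functional_extensionality => f; apply: eqf => Z.
  rewrite Ha /commutator scalerBl.
  have J : forall W, br (br X Y) W = br X (br Y W) - br Y (br X W).
    by move=> W; rewrite Hjac addrK.
  rewrite !J !D !addr !D scalerBr.
  by rewrite grp.
split.
  move=> _ X Y; apply: functional_extensionality => f; apply: eqf => Z.
  have Z0 : forall W U, br (br W W) U = 0.
    by move=> W U; apply: (addIr (br W (br W U))); rewrite add0r -Hjac.
  have S : forall U, br (br X Y) U = - br (br Y X) U.
    move=> U; have := Z0 (X + Y) U.
    rewrite !addr !addl (Z0 X) (Z0 Y) add0r addr0 addrC => /eqP; rewrite addr_eq0 => /eqP //.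
  change (a (br X Y) f *: Z = (- a (br Y X) f) *: Z).
  by rewrite scaleNr !Ha !S scalerN opprB opprK addrC.
move=> X; split; first exact: P3.
by move=> HL; split.
Qed.
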